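(* Let $L$ be a positive integer and let $(\mathbf{F},\mathbf{G})$ be an eigencomplementary pair of matrices $\mathbf{F},\mathbf{G}\in\mathbb{R}^{L\times L}$ which are both singular. If $\mathbf{u},\mathbf{w}\in\mathbb{R}^L$ satisfy $\mathbf{G}\mathbf{u}=\mathbf{F}\mathbf{w}$, then $\mathbf{u}^\top\mathbf{w}=0$.
   Context: A pair $(\mathbf{F},\mathbf{G})$ of real symmetric $L\times L$ matrices is called eigencomplementary if $\mathbf{F}$ is negative semi-definite, $\mathbf{G}$ is positive semi-definite, $\mathbf{F}$ and $\mathbf{G}$ have a common basis of eigenvectors of $\mathbb{R}^L$, and, in the case that $\mathbf{F}$ and $\mathbf{G}$ are both singular, additionally $\bigoplus_{\xi\in\sigma(\mathbf{F}),\,\xi<0}\operatorname{Eig}_{\mathbf{F}}(\xi)=\operatorname{Eig}_{\mathbf{G}}(0)$, where $\sigma(\cdot)$ denotes the spectrum and $\operatorname{Eig}_{\mathbf{M}}(\xi)$ the eigenspace of $\mathbf{M}$ for the eigenvalue $\xi$. *)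

(* Defs.v *)
From mathcomp Require Import all_boot all_order all_algebra.
From mathcomp Require Import reals.
Set Implicit Arguments. Unset Strict Implicit. Unset Printing Implicit Defensive.
Import Order.TTheory GRing.Theory Num.Theory.
Local Open Scope ring_scope.

Section Eigencomp.
Variables (R : realType) (L : nat).

Definition symmetricmx (M : 'M[R]_L) : Prop := M^T = M.

Definition nsd (M : 'M[R]_L) : Prop :=
  forall v : 'cV[R]_L, (v^T *m M *m v) 0 0 <= 0.

Definition psd (M : 'M[R]_L) : Prop :=
  forall v : 'cV[R]_L, 0 <= (v^T *m M *m v) 0 0.

Definition in_spectrum (M : 'M[R]_L) (xi : R) : Prop :=
  exists v : 'cV[R]_L, v != 0 /\ M *m v = xi *: v.

Definition in_eigenspace (M : 'M[R]_L) (xi : R) (v : 'cV[R]_L) : Prop :=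
  M *m v = xi *: v.

Definition common_eigenbasis (F G : 'M[R]_L) : Prop :=
  exists P : 'M[R]_L, P \in unitmx /\
    forall j : 'I_L, exists a b : R,
      F *m col j P = a *: col j P /\ G *m col j P = b *: col j P.

(* v belongs to the (direct) sum of the eigenspaces Eig_F(xi), xi in sigma(F),
   xi < 0 : v is a finite sum of eigenvectors for negative eigenvalues. *)
Definition in_neg_eigensum (F : 'M[R]_L) (v : 'cV[R]_L) : Prop :=
  exists (s : seq R) (w : R -> 'cV[R]_L),
    (forall xi, xi \in s -> in_spectrum F xi /\ xi < 0 /\ in_eigenspace F xi (w xi))
    /\ v = \sum_(xi <- s) w xi.

Definition singularmx (M : 'M[R]_L) : Prop := \det M = 0.

Definition eigencomplementary (F G : 'M[R]_L) : Prop :=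
  symmetricmx F /\ symmetricmx G /\ nsd F /\ psd G /\
  common_eigenbasis F G /\
  (singularmx F /\ singularmx G ->
    forall v : 'cV[R]_L, in_neg_eigensum F v <-> in_eigenspace G 0 v).

End Eigencomp.

(* Main.v *)
Require Import Defs.
From mathcomp Require Import all_boot all_order all_algebra.
From mathcomp Require Import reals.
Import Order.TTheory GRing.Theory Num.Theory.
Local Open Scope ring_scope.

Lemma vtv_gt0 (R : realType) (L : nat) (v : 'cV[R]_L) :
  v != 0 -> 0 < (v^T *m v) 0 0.
Proof.
move=> nz.
have [k vk] : exists k, v k 0 != 0.
  apply/existsP; apply: contraNT nz; rewrite negb_exists => /forallP H.
  apply/eqP/matrixP => i j; rewrite (ord1 j) mxE.
  by move: (H i); rewrite negbK => /eqP.
rewrite mxE (bigD1 k) //= !mxE.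
apply: (lt_le_trans (y := v k 0 * v k 0)); first by rewrite -expr2 lt0r sqr_ge0 andbT sqrf_eq0.
rewrite lerDl; apply: sumr_ge0 => i _; rewrite mxE -expr2; exact: sqr_ge0.
Qed.

Lemma orth (R : realType) (L : nat) (F : 'M[R]_L) (v x : 'cV[R]_L) :
  @Defs.symmetricmx R L F -> in_neg_eigensum F v -> F *m x = 0 -> (v^T *m x) 0 0 = 0.
Proof.
move=> sF [s [wv [Hs ->]]] Fx.
rewrite linear_sum /= mulmx_suml summxE big1_seq // => xi /andP [_ xis].
have [_ [xneg eig]] := Hs xi xis.
have : xi *: ((wv xi)^T *m x) = 0.
  have -> : xi *: ((wv xi)^T *m x) = (xi *: wv xi)^T *m x by rewrite scalemxAl; congr (_ *m _); apply/matrixP => i j; rewrite !mxE.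
  rewrite -eig trmx_mul sF -mulmxA Fx mulmx0 //.
move/eqP; rewrite scaler_eq0 => /orP [/eqP xi0|/eqP ->]; last by rewrite mxE.
by move: xneg; rewrite xi0 ltxx.
Qed.

Theorem lemma2p6 (R : realType) (L : nat) (F G : 'M[R]_L)
  (u w : 'cV[R]_L) :
  (0 < L)%N ->
  eigencomplementary F G ->
  singularmx F -> singularmx G ->
  G *m u = F *m w ->
  (u^T *m w) 0 0 = 0.
Proof.
move=> _ [sF [sG [nF [pG [[P [Pu HP]] Hiff]]]]] sgF sgG eq.
have Hiff' := Hiff (conj sgF sgG).
have HP' : forall j, exists ab : R * R,
    F *m col j P = ab.1 *: col j P /\ G *m col j P = ab.2 *: col j P.
  by move=> j; have [a [b H]] := HP j; exists (a, b).
have [ab Hab] := fin_all_exists HP'.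
pose a j := (ab j).1; pose b j := (ab j).2.
have colnz : forall j, col j P != 0.
  move=> j; apply/eqP => c0.
  have : delta_mx j 0 = 0 :> 'cV[R]_L.
    by rewrite -(mulKmx Pu (delta_mx j 0)) -colE c0 mulmx0.
  by move/matrixP/(_ j 0); rewrite !mxE !eqxx /= => /eqP; rewrite oner_eq0.
have ale0 : forall j, a j <= 0.
  move=> j; have := nF (col j P).
  rewrite -mulmxA (Hab j).1 -scalemxAr mxE => H.
  by rewrite -(pmulr_rle0 _ (@vtv_gt0 _ _ _ (colnz j))) mulrC.
have bneg : forall j, a j < 0 -> b j = 0.
  move=> j aj.
  have : in_eigenspace G 0 (col j P).
    apply/Hiff'; exists [:: a j], (fun _ => col j P); split; last by rewrite big_seq1.
    move=> xi; rewrite inE => /eqP ->; split; last by split; [|exact: (Hab j).1].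
    by exists (col j P); split; [exact: colnz | exact: (Hab j).1].
  rewrite /in_eigenspace (Hab j).2 scale0r => /eqP.
  by rewrite scaler_eq0 (negbTE (colnz j)) orbF => /eqP.
have FP : F *m P = P *m diag_mx (\row_j a j).
  apply/matrixP => i j.
  rewrite mul_mx_diag [in RHS]mxE [in RHS]mxE.
  transitivity ((F *m col j P) i 0); first by rewrite colE mulmxA -colE !mxE.
  by rewrite (Hab j).1 !mxE mulrC.
have GP : G *m P = P *m diag_mx (\row_j b j).
  apply/matrixP => i j.
  rewrite mul_mx_diag [in RHS]mxE [in RHS]mxE.
  transitivity ((G *m col j P) i 0); first by rewrite colE mulmxA -colE !mxE.
  by rewrite (Hab j).2 !mxE mulrC.
pose c := invmx P *m w; pose d := invmx P *m u.
have wE : w = P *m c by rewrite /c mulKVmx.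
have uE : u = P *m d by rewrite /d mulKVmx.
have eq2 : diag_mx (\row_j b j) *m d = diag_mx (\row_j a j) *m c.
  apply: (can_inj (mulKmx Pu)); rewrite !mulmxA -GP -FP -!mulmxA -uE -wE //.
have ac0 : diag_mx (\row_j a j) *m c = 0.
  apply/matrixP => i k; rewrite mul_diag_mx !mxE.
  have [aneg|] := ltP (a i) 0.
    move/matrixP/(_ i k): eq2; rewrite !mul_diag_mx !mxE bneg // mul0r.
    by move=> <-.
  move=> age; have -> : a i = 0 by apply/eqP; rewrite eq_le ale0 age.
  by rewrite mul0r.
have Fw0 : F *m w = 0 by rewrite wE mulmxA FP -mulmxA ac0 mulmx0.
have Gu0 : in_eigenspace G 0 u by rewrite /in_eigenspace scale0r eq.
exact: (@orth R L F u w sF (proj2 (Hiff' u) Gu0) Fw0).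
Qed.
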